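(* For any deterministic MDP with effective planning window $W$, there is an RL algorithm (which may depend on $W$) whose sample complexity on this MDP is at most $T^2A^W$.
   Context: Deterministic finite-horizon MDP $\mathcal M=(\mathcal S,\mathcal A,T,s_1,f,R)$: finite states, actions with $A=|\mathcal A|$, start state $s_1$, transitions $s_{t+1}=f(s_t,a_t)$, rewards $R(s_t,a_t)$, steps $t\in[T]$, no discounting; a policy is optimal if it maximizes $J(\pi)=\mathbb E_\pi[\sum_{t=1}^TR(s_t,a_t)]$. An RL algorithm knows $\mathcal A$ and $T$, interacts only by running episodes from $s_1$ (observing states and rewards), each episode counting $T$ timesteps; its sample complexity is the least $n$ such that its output after $n$ timesteps is optimal with probability at least $1/2$. Q-value iteration: $Q'=\mathrm{QVI}(Q)$ with $Q'_t(s,a)=R(s,a)+\max_{a'}Q_{t+1}(f(s,a),a')$ for $t<T$, $Q'_T(s,a)=R(s,a)$; $\Pi(Q)$ is the set of deterministic policies with $\pi_t(s)\in\arg\max_aQ_t(s,a)$ for all $s,t$. Define $Q^1_t(s,a)=R(s,a)$ for all $t$ and $Q^i=\mathrm{QVI}(Q^{i-1})$ for $i=2,\dots,T$. The effective planning window $W$ is the least $W\in[T]$ such that every policy in $\Pi(Q^W)$ is optimal. *)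

(* Defs.v *)
From mathcomp Require Import all_boot all_order all_algebra.
Set Implicit Arguments. Unset Strict Implicit. Unset Printing Implicit Defensive.
Import Order.TTheory GRing.Theory Num.Theory.
Local Open Scope ring_scope.

Section MDP.
Variable R : realFieldType.

Record dmdp (S : finType) (A : nat) := DMDP {
  start : S;
  trans : S -> 'I_A -> S;
  rew   : S -> 'I_A -> R }.

(* deterministic Markov policies pi t s (steps t = 1..T; other t irrelevant) *)
Definition policy (S : finType) (A : nat) := nat -> S -> 'I_A.

(* maximum of a function over the (nonempty) action set; 0 if A = 0 *)
Definition amax (A : nat) : ('I_A -> R) -> R :=
  match A as n return ('I_n -> R) -> R with
  | 0 => fun _ => 0
  | n.+1 => fun g => \big[Num.max/g ord0]_(a < n.+1) g a
  end.

Section Fixed.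
Variables (S : finType) (A T : nat) (M : dmdp S A).

Fixpoint ret (pi : policy S A) (k t : nat) (s : S) : R :=
  match k with
  | 0 => 0
  | k'.+1 => rew M s (pi t s) + ret pi k' t.+1 (trans M s (pi t s))
  end.

Definition J (pi : policy S A) : R := ret pi T 1 (start M).

Definition optimal (pi : policy S A) : Prop :=
  forall pi' : policy S A, J pi' <= J pi.

Definition qfun := nat -> S -> 'I_A -> R.

Definition QVI (Q : qfun) : qfun := fun t s a =>
  if (t < T)%N then rew M s a + amax (fun a' => Q t.+1 (trans M s a) a')
  else rew M s a.

Definition greedy (Q : qfun) (pi : policy S A) : Prop :=
  forall t, (1 <= t <= T)%N -> forall s a, Q t s a <= Q t s (pi t s).

(* Q^1_t(s,a) = R(s,a);  Q^i = QVI(Q^{i-1}) *)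
Definition Qit (i : nat) : qfun := iter i.-1 QVI (fun _ s a => rew M s a).

Definition window_ok (W : nat) : Prop :=
  forall pi, greedy (Qit W) pi -> optimal pi.

Definition eff_window (W : nat) : Prop :=
  [/\ (1 <= W <= T)%N, window_ok W &
      forall W', (1 <= W' < W)%N -> ~ window_ok W'].
End Fixed.

Definition obs (S : eqType) (A : nat) := (S * 'I_A * R)%type.

(* A deterministic episodic RL algorithm that knows the action set 'I_A
   (and T, through the choice of the algorithm) but not the MDP; it can only
   compare observed states for equality.
   - act H cur s : action taken in the current episode, given the completed
     episodes H, the current partial episode cur and the current state s;
   - out H : the policy output after the completed episodes H. *)
Record algo (A : nat) (S : eqType) := Algo {
  act : seq (seq (obs S A)) -> seq (obs S A) -> S -> 'I_A;
  out : seq (seq (obs S A)) -> nat -> S -> 'I_A }.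

Section Run.
Variables (S : finType) (A T : nat) (M : dmdp S A) (alg : algo A S).

Fixpoint run_ep (H : seq (seq (obs S A))) (k : nat) (cur : seq (obs S A))
    (s : S) : seq (obs S A) :=
  match k with
  | 0 => cur
  | k'.+1 => let a := act alg H cur s in
             run_ep H k' (rcons cur (s, a, rew M s a)) (trans M s a)
  end.

Definition episode (H : seq (seq (obs S A))) := run_ep H T [::] (start M).

Fixpoint history (n : nat) : seq (seq (obs S A)) :=
  match n with
  | 0 => [::]
  | n'.+1 => let H := history n' in rcons H (episode H)
  end.

(* sample complexity of alg on M is at most B: some number of timesteps
   n * T <= B after which the output is optimal (deterministic algorithm,
   so "with probability >= 1/2" means "surely") *)
Definition sample_complexity_le (B : nat) : Prop :=
  exists n, (n * T <= B)%N /\ optimal T M (out alg (history n)).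
End Run.
End MDP.

(* Main.v *)
Require Import Defs.
From Stdlib Require Import FunctionalExtensionality.
From mathcomp Require Import all_boot all_order all_algebra.
Set Implicit Arguments. Unset Strict Implicit. Unset Printing Implicit Defensive.
Import Order.TTheory GRing.Theory Num.Theory.
Local Open Scope ring_scope.

Section Amax.
Variable R : realFieldType.
Lemma amax_ge (A : nat) (g : 'I_A -> R) a : g a <= amax g.
Proof. case: A g a => [|n] g a; first by case: a. by rewrite /= le_bigmax. Qed.
Lemma amax_ex (A : nat) (g : 'I_A -> R) : (0 < A)%N -> exists a, amax g = g a.
Proof.
case: A g => [|n] g // _.
exists (Order.arg_max ord0 xpredT g).
case: arg_maxP => //= i _ Hi.
apply/eqP; rewrite eq_le le_bigmax andbT /=.
apply: bigmax_le => [|j _]; exact: Hi.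
Qed.
End Amax.

Section Look.
Variables (R : realFieldType) (S : finType) (A T : nat) (M : dmdp R S A).
Hypothesis hA : (0 < A)%N.

Fixpoint lk (i t : nat) (s : S) (g : nat -> 'I_A) : R :=
  match i with
  | 0 => 0
  | i'.+1 => rew M s (g t) + (if (t < T)%N then lk i' t.+1 (trans M s (g t)) g else 0)
  end.

Lemma lk_ext i t s g h : (forall n, (t <= n < t + i)%N -> g n = h n) ->
  lk i t s g = lk i t s h.
Proof.
elim: i t s => [|i IH] t s E //=.
have -> : g t = h t by apply: E; rewrite leqnn /= addnS ltnS leq_addr.
congr (_ + _); case: ifP => // _; apply: IH => n /andP[H1 H2]; apply: E.
by rewrite (ltnW H1) addnS -addSn.
Qed.

Lemma Qchar i t s a :
  (forall g, g t = a -> lk i.+1 t s g <= Qit T M i.+1 t s a) /\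
  exists g, g t = a /\ lk i.+1 t s g = Qit T M i.+1 t s a.
Proof.
elim: i t s a => [|i IH] t s a.
  rewrite /Qit /=; split.
    by move=> g ->; rewrite if_same addr0.
  by exists (fun _ => a); split => //; rewrite if_same addr0.
have QE : Qit T M i.+2 t s a = QVI T M (Qit T M i.+1) t s a.
  by [].
rewrite QE /QVI; split.
  move=> g Hg /=; rewrite Hg; case: (t < T)%N; last by rewrite addr0.
  rewrite lerD2l; apply: le_trans (amax_ge _ (g t.+1)).
  by case: (IH t.+1 (trans M s a) (g t.+1)) => H _; apply: H.
case Ht: (t < T)%N.
  have [a' Ha'] := amax_ex (fun a' => Qit T M i.+1 t.+1 (trans M s a) a') hA.
  have [_ [g' [Hg'1 Hg'2]]] := IH t.+1 (trans M s a) a'.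
  exists (fun n => if n == t then a else g' n); split; first by rewrite eqxx.
  transitivity (rew M s a + lk i.+1 t.+1 (trans M s a) (fun n => if n == t then a else g' n)).
    by rewrite /= eqxx Ht.
  rewrite Ha' -Hg'2; congr (_ + _); apply: lk_ext => n /andP[H1 _].
  by rewrite (gtn_eqF H1).
exists (fun _ => a); split => //=; by rewrite Ht addr0.
Qed.
End Look.
From mathcomp Require Import zify.

Section Main.
Variables (R : realFieldType) (A T W : nat).
Hypothesis hA : (0 < A)%N.
Local Notation FF := {ffun 'I_W -> 'I_A}.
Definition dA : 'I_A := Ordinal hA.
Definition sig0 : FF := [ffun _ => dA].
Definition NN : nat := #|{: FF}|.
Definition ext (s : FF) (m : nat) : 'I_A := if insub m is Some i then s i else dA.
Definition sumrew (S : eqType) (l : seq (obs R S A)) : R := \sum_(x <- l) x.2.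
Definition score (S : eqType) (ep : seq (obs R S A)) (j : nat) : R :=
  sumrew (take W (drop j.-1 ep)).
Definition idx (s : FF) : nat := index s (enum {: FF}).
Definition sigof (k : nat) : FF := nth sig0 (enum {: FF}) k.
Definition Fsc (S : eqType) (L : nat -> seq (obs R S A)) j (s : FF) : R :=
  score (L (j.-1 * NN + idx s)%N) j.
Definition pre (S : eqType) (L : nat -> seq (obs R S A)) (j : nat) : 'I_A :=
  ext (Order.arg_max sig0 xpredT (Fsc L j)) 0.
Definition gact (S : eqType) (H : seq (seq (obs R S A))) (j : nat) : 'I_A :=
  if (j < (size H %/ NN).+1)%N then pre (nth [::] H) j
  else ext (sigof (size H %% NN)) (j - (size H %/ NN).+1).
Definition theAlg (S : eqType) : algo R A S :=
  Algo (fun H cur _ => gact H (size cur).+1) (fun H t _ => pre (nth [::] H) t).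

Lemma NN_gt0 : (0 < NN)%N.
Proof. by rewrite /NN card_ffun !card_ord expn_gt0 hA. Qed.

Lemma NN_eq : NN = (A ^ W)%N.
Proof. by rewrite /NN card_ffun !card_ord. Qed.

Lemma idx_lt s : (idx s < NN)%N.
Proof. by rewrite /idx /NN cardE index_mem mem_enum. Qed.

Lemma sigof_idx s : sigof (idx s) = s.
Proof. by rewrite /sigof /idx nth_index // mem_enum. Qed.

Lemma ext_lt (s : FF) m (H : (m < W)%N) : ext s m = s (Ordinal H).
Proof. by rewrite /ext insubT. Qed.

Lemma pre_stable (S : eqType) (L1 L2 : nat -> seq (obs R S A)) n :
  (forall i, (i < n.-1 * NN + NN)%N -> L1 i = L2 i) -> pre L1 n = pre L2 n.
Proof.
move=> E; rewrite /pre; congr (ext _ 0).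
have -> : Fsc L1 n = Fsc L2 n.
  apply: functional_extensionality => s; rewrite /Fsc E //.
  by rewrite ltn_add2l idx_lt.
by [].
Qed.

Section Fixed.
Variables (S : finType) (M : dmdp R S A).

Fixpoint olp (g : nat -> 'I_A) k t s : seq (obs R S A) :=
  match k with
  | 0 => [::]
  | k'.+1 => (s, g t, rew M s (g t)) :: olp g k' t.+1 (trans M s (g t))
  end.

Fixpoint runs (g : nat -> 'I_A) m t s : S :=
  match m with
  | 0 => s
  | m'.+1 => runs g m' t.+1 (trans M s (g t))
  end.

Lemma run_olp (alg : algo R A S) H g :
  (forall cur s, act alg H cur s = g (size cur).+1) ->
  forall k cur s, run_ep M alg H k cur s = cur ++ olp g k (size cur).+1 s.
Proof.
move=> Hg; elim=> [|k IH] cur s /=; first by rewrite cats0.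
by rewrite IH size_rcons Hg cat_rcons.
Qed.

Lemma size_hist alg n : size (history T M alg n) = n.
Proof. by elim: n => //= n IH; rewrite size_rcons IH. Qed.

Lemma nth_hist alg n i : (i < n)%N ->
  nth [::] (history T M alg n) i = episode T M alg (history T M alg i).
Proof.
elim: n => // n IH; rewrite ltnS leq_eqVlt => /orP[/eqP->|Hi] /=.
  by rewrite nth_rcons size_hist ltnn eqxx.
by rewrite nth_rcons size_hist Hi IH.
Qed.

Lemma olp_drop g m k t s :
  drop m (olp g (m + k) t s) = olp g k (t + m) (runs g m t s).
Proof.
elim: m t s => [|m IH] t s /=; first by rewrite drop0 addn0.
by rewrite IH addSnnS.
Qed.

Lemma olp_sum g i k t s : (0 < k)%N -> (t + k = T.+1)%N ->
  sumrew (take i (olp g k t s)) = lk T M i t s g.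
Proof.
elim: i k t s => [|i IH] k t s k0 Hk; first by rewrite take0 /sumrew big_nil.
case: k k0 Hk => // k _ Hk /=.
rewrite /sumrew big_cons /=; congr (_ + _).
case: ifP => Ht.
  rewrite -(IH k) //; first by case: k Hk => //; rewrite addn1 => /eqP; rewrite eqSS => /eqP E; move: Ht; rewrite E ltnn.
  by rewrite addSnnS.
have -> : k = 0%N by move: Ht Hk; rewrite addnS => /negbT; rewrite -leqNgt; lia.
by case: i {IH} => [|i]; rewrite /= big_nil.
Qed.


Let alg := theAlg S.
Let Hist := history T M alg (T * NN).
Definition P (n : nat) : 'I_A := pre (nth [::] Hist) n.
Fixpoint stf (n : nat) : S :=
  match n with 0 => start M | n'.+1 => trans M (stf n') (P n'.+1) end.

Lemma ep_eq e : episode T M alg (history T M alg e) =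
  olp (gact (history T M alg e)) T 1 (start M).
Proof. by rewrite /episode (@run_olp alg _ (gact (history T M alg e))). Qed.

Lemma gact_eq t (sg : FF) n : (1 <= t <= T)%N -> (1 <= n)%N ->
  gact (history T M alg (t.-1 * NN + idx sg)) n =
  if (n < t)%N then P n else ext sg (n - t).
Proof.
move=> /andP[t1 tT] n1.
have Hd : ((t.-1 * NN + idx sg) %/ NN = t.-1)%N.
  by rewrite divnMDl ?NN_gt0 // divn_small ?idx_lt // addn0.
have Hm : ((t.-1 * NN + idx sg) %% NN = idx sg)%N.
  by rewrite modnMDl modn_small ?idx_lt.
rewrite /gact size_hist Hd Hm (prednK t1) sigof_idx.
case: ifP => // nt; rewrite /P; apply: pre_stable => i Hi.
have := idx_lt sg; have := NN_gt0 => N0 I0.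
have Hi' : (i < n * NN)%N by move: Hi; case: (n) n1 => // n' _; rewrite mulSn addnC.
have Hn : (n * NN <= t.-1 * NN)%N by rewrite leq_mul2r; apply/orP; right; rewrite -ltnS prednK.
rewrite !nth_hist //.
  apply: (leq_trans Hi'); apply: (leq_trans Hn); rewrite leq_mul2r; apply/orP; right.
  by apply: leq_trans (leq_pred _) tT.
by apply: (leq_trans Hi'); apply: (leq_trans Hn); apply: leq_addr.
Qed.

Lemma runsS g m t s : runs g m.+1 t s = trans M (runs g m t s) (g (t + m)%N).
Proof.
elim: m t s => [|m IH] t s; first by rewrite addn0.
change (runs g m.+2 t s) with (runs g m.+1 t.+1 (trans M s (g t))); rewrite IH.
by change (runs g m.+1 t s) with (runs g m t.+1 (trans M s (g t))); rewrite addSnnS.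
Qed.

Lemma runs_st g m : (forall n, (1 <= n <= m)%N -> g n = P n) -> runs g m 1 (start M) = stf m.
Proof.
elim: m => [|m IH] Hg //; rewrite runsS IH /=.
  by rewrite Hg // add1n ltnS leqnn.
by move=> n /andP[n1 nm]; apply: Hg; rewrite n1 (leq_trans nm).
Qed.

Lemma Fsc_eq t (sg : FF) : (1 <= t <= T)%N ->
  Fsc (nth [::] Hist) t sg = lk T M W t (stf t.-1) (fun n => ext sg (n - t)).
Proof.
move=> /andP[t1 tT].
have Hte : (t.-1 * NN + idx sg < T * NN)%N.
  have := idx_lt sg => I0.
  apply: (@leq_trans (t.-1 * NN + NN)); first by rewrite ltn_add2l.
  by rewrite addnC -mulSn prednK // leq_mul2r tT orbT.
rewrite /Fsc /Hist nth_hist // ep_eq /score.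
set g := gact _.
have -> : olp g T 1 (start M) = olp g (t.-1 + (T - t.-1)) 1 (start M)
  by rewrite subnKC // (leq_trans (leq_pred _) tT).
rewrite olp_drop add1n prednK // olp_sum //; last first.
  by rewrite -{1}(prednK t1) addSn subnKC // (leq_trans (leq_pred _) tT).
  by rewrite subn_gt0 prednK.
rewrite (@runs_st g); last first.
  move=> n /andP[n1 nt]; rewrite /g gact_eq ?t1 ?tT // ifT //.
  by rewrite -(prednK t1) ltnS.
apply: lk_ext => n /andP[tn _]; rewrite /g gact_eq ?t1 ?tT ?(leq_trans t1 tn) //.
by rewrite ltnNge tn.
Qed.

Lemma greedy_P t a : (0 < W)%N -> (1 <= t <= T)%N ->
  Qit T M W t (stf t.-1) a <= Qit T M W t (stf t.-1) (P t).
Proof.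
move=> W0 Ht; have /andP[t1 tT] := Ht.
set s := stf t.-1.
have [_ [ga [ga1 ga2]]] := Qchar T M hA W.-1 t s a; rewrite prednK // in ga2.
pose sa : FF := [ffun m : 'I_W => ga (t + m)%N].
have E1 : lk T M W t s ga = lk T M W t s (fun n => ext sa (n - t)).
  apply: lk_ext => n /andP[tn nW].
  have H : (n - t < W)%N by lia.
  by rewrite (ext_lt sa H) ffunE /= subnKC.
rewrite -ga2 E1 -(Fsc_eq sa Ht) /P /pre.
case: arg_maxP => //= sx _ Hmax.
apply: le_trans (Hmax sa isT) _.
rewrite (Fsc_eq sx Ht).
have [H1 _] := Qchar T M hA W.-1 t s (ext sx (t - t)).
rewrite prednK // in H1; rewrite subnn in H1; apply: H1; by rewrite subnn.
Qed.

Definition piG : policy S A := fun t s =>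
  if (1 <= t <= T)%N && (s == stf t.-1) then P t
  else Order.arg_max dA xpredT (Qit T M W t s).

Lemma piG_greedy : (0 < W)%N -> greedy T (Qit T M W) piG.
Proof.
move=> W0 t Ht s a; rewrite /piG Ht /=.
case: eqP => [->|_]; first exact: greedy_P.
by case: arg_maxP => //= b _ Hb; apply: Hb.
Qed.

Lemma ret_eq k t : (1 <= t)%N -> (t + k <= T.+1)%N ->
  ret M piG k t (stf t.-1) = ret M (out alg Hist) k t (stf t.-1).
Proof.
elim: k t => [|k IH] t // t1 Hk /=.
have tT : (t <= T)%N by move: Hk; rewrite addnS ltnS; apply: leq_trans; rewrite leq_addr.
have -> : piG t (stf t.-1) = P t by rewrite /piG t1 tT eqxx.
rewrite -/(P t).
congr (_ + _).
have -> : trans M (stf t.-1) (P t) = stf t.+1.-1 by rewrite /= -{3}(prednK t1).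
by apply: IH => //; rewrite addSnnS.
Qed.

Lemma out_optimal : (0 < W)%N -> window_ok T M W -> optimal T M (out alg Hist).
Proof.
move=> W0 Hok pi'; apply: le_trans (Hok _ (piG_greedy W0) pi') _.
by rewrite /J (ret_eq (k:=T) (t:=1)) // add1n.
Qed.
End Fixed.
End Main.

Theorem mainTheorem12 (R : realFieldType) (A T W : nat) :
  (0 < A)%N -> (0 < T)%N ->
  exists alg : forall S : eqType, algo R A S,
    forall (S : finType) (M : dmdp R S A),
      eff_window T M W ->
      sample_complexity_le T M (alg S) (T ^ 2 * A ^ W).
Proof.
move=> hA hT; exists (fun S => theAlg R W hA S) => S M [/andP[W1 _] Hok _].
exists (T * NN A W)%N; split.
  by rewrite NN_eq mulnAC mulnn.
exact: (out_optimal hA W1 Hok).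
Qed.
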